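(* Let $\mathbf{E},\mathbf{Y}$ be Euclidean spaces, $\mathcal{X}\subset\mathbf{E}$ nonempty closed convex, $h\colon\mathbf{Y}\to\mathbb{R}$ convex, $F\colon\mathbf{E}\to\mathbf{Y}$ continuously differentiable, $f=h\circ F$, $f_x(y)=h(F(x)+\nabla F(x)(y-x))$, and $\partial f(x)=\nabla F(x)^*\partial h(F(x))$. Assume $\mathcal{X}^*=\operatorname{argmin}_{\mathcal{X}}f\ne\emptyset$, $f(x)-\min_{\mathcal{X}}f\ge\mu\,\mathrm{dist}(x,\mathcal{X}^* )$ for all $x\in\mathcal{X}$, and $|f(y)-f_x(y)|\le a\|y-x\|^2+b\|y-x\|$ for all $x,y\in\mathcal{X}$, where $a>0$, $b\ge0$ and $\mu>2b$. Let $L:=\sup\{\|\zeta\|:\zeta\in\partial f(x),\,x\in\mathcal{X},\,\mathrm{dist}(x,\mathcal{X}^* )\le\frac{\mu-2b}{2a}\}$, assumed finite and positive. Let $\gamma\in(0,1)$ and let $x_0\in\mathcal{X}$ satisfy $\mathrm{dist}(x_0,\mathcal{X}^* )\le\gamma\frac{\mu-2b}{2a}$. Then the iterates of the Polyak subgradient method started at $x_0$ satisfy $$\mathrm{dist}^2(x_{k+1},\mathcal{X}^* )\le\Big(1-\frac{(1-\gamma)\mu(\mu-2b)}{L^2}\Big)\mathrm{dist}^2(x_k,\mathcal{X}^* )\quad\forall k\ge0.$$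
   Context: $\|\cdot\|$ is the Euclidean norm, $\mathrm{dist}$ the Euclidean distance, $\mathrm{proj}_{\mathcal{X}}$ the Euclidean projection, $\nabla F(x)^*$ the adjoint of the Jacobian, and $\partial h$ the convex subdifferential. Polyak subgradient method: given $x_k$, choose $\zeta_k\in\partial f(x_k)$; if $\zeta_k=0$ set $x_{k+1}=x_k$, otherwise $x_{k+1}=\mathrm{proj}_{\mathcal{X}}\big(x_k-\frac{f(x_k)-\min_{\mathcal{X}}f}{\|\zeta_k\|^2}\zeta_k\big)$. *)

(* Defs.v *)
(* Euclidean spaces are modelled concretely as R^n = Fin.t n -> R
   with the standard inner product. *)
From Stdlib Require Import Reals Lra.
From Stdlib Require Fin.
Open Scope R_scope.

Definition vec (n : nat) := Fin.t n -> R.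

Fixpoint fsum (n : nat) : (Fin.t n -> R) -> R :=
  match n return (Fin.t n -> R) -> R with
  | O => fun _ => 0
  | S m => fun f => f Fin.F1 + fsum m (fun i => f (Fin.FS i))
  end.

Definition vadd {n} (u v : vec n) : vec n := fun i => u i + v i.
Definition vsub {n} (u v : vec n) : vec n := fun i => u i - v i.
Definition vscale {n} (c : R) (v : vec n) : vec n := fun i => c * v i.
Definition vzero {n} : vec n := fun _ => 0.
Definition dot {n} (u v : vec n) : R := fsum n (fun i => u i * v i).
Definition norm {n} (v : vec n) : R := sqrt (dot v v).

(* m x n matrices = linear maps R^n -> R^m; matvec and the adjoint (transpose) *)
Definition mat (m n : nat) := Fin.t m -> Fin.t n -> R.
Definition matvec {m n} (A : mat m n) (v : vec n) : vec m :=
  fun i => fsum n (fun j => A i j * v j).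
Definition adjvec {m n} (A : mat m n) (w : vec m) : vec n :=
  fun j => fsum m (fun i => A i j * w i).

Definition convex_set {n} (S : vec n -> Prop) : Prop :=
  forall x y t, S x -> S y -> 0 <= t <= 1 ->
    S (vadd (vscale t x) (vscale (1 - t) y)).
Definition closed_vset {n} (S : vec n -> Prop) : Prop :=
  forall x, (forall eps, 0 < eps -> exists y, S y /\ norm (vsub y x) < eps) -> S x.

Definition convex_fun {m} (h : vec m -> R) : Prop :=
  forall x y t, 0 <= t <= 1 ->
    h (vadd (vscale t x) (vscale (1 - t) y)) <= t * h x + (1 - t) * h y.

Definition has_jacobian {n m} (F : vec n -> vec m) (J : vec n -> mat m n) : Prop :=
  forall x eps, 0 < eps -> exists delta, 0 < delta /\
    forall y, norm (vsub y x) < delta ->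
      norm (vsub (vsub (F y) (F x)) (matvec (J x) (vsub y x))) <= eps * norm (vsub y x).
Definition continuous_jacobian {n m} (J : vec n -> mat m n) : Prop :=
  forall x i j eps, 0 < eps -> exists delta, 0 < delta /\
    forall y, norm (vsub y x) < delta -> Rabs (J y i j - J x i j) < eps.
Definition C1_with_jacobian {n m} (F : vec n -> vec m) (J : vec n -> mat m n) : Prop :=
  has_jacobian F J /\ continuous_jacobian J.

Definition subgrad {m} (h : vec m -> R) (y g : vec m) : Prop :=
  forall z, h y + dot g (vsub z y) <= h z.

Definition subdiff_comp {n m} (h : vec m -> R) (F : vec n -> vec m)
    (J : vec n -> mat m n) (x zeta : vec n) : Prop :=
  exists v, subgrad h (F x) v /\ zeta = adjvec (J x) v.

Definition is_inf (E : R -> Prop) (l : R) : Prop :=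
  (forall r, E r -> l <= r) /\ (forall b, (forall r, E r -> b <= r) -> b <= l).
Definition is_sup (E : R -> Prop) (l : R) : Prop :=
  (forall r, E r -> r <= l) /\ (forall b, (forall r, E r -> r <= b) -> l <= b).

Definition is_dist {n} (S : vec n -> Prop) (x : vec n) (d : R) : Prop :=
  is_inf (fun r => exists y, S y /\ r = norm (vsub x y)) d.

Definition is_proj {n} (S : vec n -> Prop) (z p : vec n) : Prop :=
  S p /\ forall q, S q -> norm (vsub z p) <= norm (vsub z q).

(* Main.v *)
Require Import Defs.
From Stdlib Require Import Reals Lra Classical FunctionalExtensionality.
From Stdlib Require Fin.
Open Scope R_scope.
From Stdlib Require Import Reals.

Lemma fsum_ext n (f g : Fin.t n -> R) : (forall i, f i = g i) -> fsum n f = fsum n g.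
Proof. revert f g; induction n; intros f g H; simpl; auto.
  rewrite H, (IHn (fun i => f (Fin.FS i)) (fun i => g (Fin.FS i))); auto. Qed.

Lemma fsum_lin n (f g : Fin.t n -> R) c d :
  fsum n (fun i => c * f i + d * g i) = c * fsum n f + d * fsum n g.
Proof. revert f g; induction n; intros f g; simpl. ring.
  rewrite IHn. ring. Qed.

Lemma fsum_lin3 n (f g k : Fin.t n -> R) c d e :
  fsum n (fun i => c * f i + d * g i + e * k i) = c * fsum n f + d * fsum n g + e * fsum n k.
Proof. revert f g k; induction n; intros f g k; simpl. ring.
  rewrite IHn. ring. Qed.

Lemma fsum_scal n (f : Fin.t n -> R) c : fsum n (fun i => c * f i) = c * fsum n f.
Proof. revert f; induction n; intros f; simpl. ring. rewrite IHn; ring. Qed.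

Lemma fsum_nonneg n (f : Fin.t n -> R) : (forall i, 0 <= f i) -> 0 <= fsum n f.
Proof. revert f; induction n; intros f H; simpl. lra.
  pose proof (H Fin.F1). pose proof (IHn (fun i => f (Fin.FS i)) (fun i => H _)). lra. Qed.

Lemma fsum_zero_inv n (f : Fin.t n -> R) : (forall i, 0 <= f i) -> fsum n f = 0 -> forall i, f i = 0.
Proof. revert f; induction n; intros f H E i. inversion i.
  simpl in E. pose proof (H Fin.F1).
  pose proof (fsum_nonneg n (fun i => f (Fin.FS i)) (fun i => H _)).
  apply (Fin.caseS' i (fun i => f i = 0)). lra.
  intro p. apply (IHn (fun i => f (Fin.FS i))). intros; apply H. lra. Qed.

Lemma fsum_swap n m (f : Fin.t n -> Fin.t m -> R) :
  fsum n (fun i => fsum m (fun j => f i j)) = fsum m (fun j => fsum n (fun i => f i j)).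
Proof. revert f; induction n; intros f; simpl.
  - clear f. induction m; simpl; auto. rewrite <- IHm. ring.
  - rewrite IHn. replace (fsum m (fun j => f Fin.F1 j) + fsum m (fun j => fsum n (fun i => f (Fin.FS i) j)))
      with (1 * fsum m (fun j => f Fin.F1 j) + 1 * fsum m (fun j => fsum n (fun i => f (Fin.FS i) j))) by ring.
    rewrite <- fsum_lin. apply fsum_ext; intros; ring. Qed.

Lemma dot_nonneg n (u : vec n) : 0 <= dot u u.
Proof. apply fsum_nonneg; intros; nra. Qed.

Lemma norm_nonneg n (u : vec n) : 0 <= norm u.
Proof. apply sqrt_pos. Qed.

Lemma norm_sq n (u : vec n) : norm u ^ 2 = dot u u.
Proof. apply pow2_sqrt, dot_nonneg. Qed.

Lemma norm_le_dot n (u v : vec n) : norm u <= norm v -> dot u u <= dot v v.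
Proof. intro H. apply sqrt_le_0; auto using dot_nonneg. Qed.

Lemma norm_sym n (u v : vec n) : norm (vsub u v) = norm (vsub v u).
Proof. unfold norm. f_equal. unfold dot, vsub. apply fsum_ext; intros; ring. Qed.

Lemma lim_le A B K : (forall eps, 0 < eps <= 1 -> A <= B + eps * K) -> A <= B.
Proof. intros H. destruct (Rle_or_lt A B) as [|Hlt]; auto.
  set (e := Rmin 1 ((A - B) / (2 * (Rabs K + 1)))).
  assert (HK : 0 < Rabs K + 1) by (pose proof (Rabs_pos K); lra).
  assert (He1 : e <= 1) by apply Rmin_l.
  assert (He2 : e <= (A - B) / (2 * (Rabs K + 1))) by apply Rmin_r.
  assert (He0 : 0 < e).
  { unfold e. apply Rmin_glb_lt. lra. apply Rdiv_lt_0_compat; lra. }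
  specialize (H e (conj He0 He1)).
  assert (e * K <= e * (Rabs K + 1)).
  { apply Rmult_le_compat_l. lra. pose proof (Rle_abs K). lra. }
  assert (e * (Rabs K + 1) <= (A - B) / 2).
  { apply (Rmult_le_compat_r (Rabs K + 1)) in He2; [|lra].
    replace ((A - B) / (2 * (Rabs K + 1)) * (Rabs K + 1)) with ((A-B)/2) in He2 by (field; lra).
    lra. }
  lra. Qed.

Lemma dist_exists n (S : vec n -> Prop) x : (exists y, S y) -> exists d, is_dist S x d.
Proof. intros [y0 Hy0].
  set (E := fun s => exists y, S y /\ s = - norm (vsub x y)).
  assert (Hb : bound E). { exists 0. intros s [y [_ ->]]. pose proof (norm_nonneg _ (vsub x y)). lra. }
  assert (Hne : exists s, E s). { exists (- norm (vsub x y0)). exists y0; auto. }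
  destruct (completeness E Hb Hne) as [M [HM1 HM2]].
  exists (- M). split.
  - intros r [y [Sy ->]]. assert (E (- norm (vsub x y))) by (exists y; auto).
    specialize (HM1 _ H). lra.
  - intros b Hb'. assert (M <= - b). { apply HM2. intros s [y [Sy ->]].
      assert (b <= norm (vsub x y)) by (apply Hb'; exists y; auto). lra. } lra. Qed.

Lemma dist_nonneg n (S : vec n -> Prop) x d : is_dist S x d -> 0 <= d.
Proof. intros [_ H]. apply H. intros r [y [_ ->]]. apply norm_nonneg. Qed.

Lemma dist_unique n (S : vec n -> Prop) x d d' : is_dist S x d -> is_dist S x d' -> d = d'.
Proof. intros [H1 H2] [H1' H2']. apply Rle_antisym; auto. Qed.

Lemma dist_near n (S : vec n -> Prop) x d eps : is_dist S x d -> 0 < eps ->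
  exists y, S y /\ norm (vsub x y) <= d + eps.
Proof. intros [H1 H2] He. apply NNPP. intro Hn.
  assert (d + eps <= d). { apply H2. intros r [y [Sy ->]].
    destruct (Rle_or_lt (norm (vsub x y)) (d + eps)) as [Hm|Hm]; [|lra].
    exfalso; apply Hn; exists y; auto. }
  lra. Qed.

Lemma proj_nonexp n (X : vec n -> Prop) z p xb :
  convex_set X -> is_proj X z p -> X xb -> norm (vsub p xb) <= norm (vsub z xb).
Proof. intros Hc [Xp Hp] Xb.
  set (c := dot (vsub z p) (vsub xb p)).
  assert (Hc0 : c <= 0).
  { apply (lim_le c 0 (dot (vsub xb p) (vsub xb p) / 2)). intros t Ht.
    assert (Xq : X (vadd (vscale t xb) (vscale (1 - t) p))) by (apply Hc; auto; lra).
    pose proof (norm_le_dot _ _ _ (Hp _ Xq)) as Hd.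
    assert (E : dot (vsub z (vadd (vscale t xb) (vscale (1 - t) p))) (vsub z (vadd (vscale t xb) (vscale (1 - t) p)))
      = 1 * dot (vsub z p) (vsub z p) + (-2 * t) * c + (t*t) * dot (vsub xb p) (vsub xb p)).
    { unfold c, dot. rewrite <- fsum_lin3. apply fsum_ext; intros; unfold vsub, vadd, vscale; ring. }
    rewrite E in Hd. pose proof (dot_nonneg _ (vsub xb p)). nra. }
  apply sqrt_le_1_alt.
  assert (E : dot (vsub z xb) (vsub z xb) = 1 * dot (vsub z p) (vsub z p) + (-2) * c + 1 * dot (vsub p xb) (vsub p xb)).
  { unfold c, dot. rewrite <- fsum_lin3. apply fsum_ext; intros; unfold vsub; ring. }
  rewrite E. pose proof (dot_nonneg _ (vsub z p)). lra. Qed.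

Lemma dot_adj n m (J : mat m n) v u : dot v (matvec J u) = dot (adjvec J v) u.
Proof. unfold dot, matvec, adjvec.
  transitivity (fsum m (fun i => fsum n (fun j => J i j * v i * u j))).
  - apply fsum_ext; intros. rewrite <- fsum_scal. apply fsum_ext; intros; ring.
  - rewrite fsum_swap. apply fsum_ext; intros. rewrite Rmult_comm, <- fsum_scal.
    apply fsum_ext; intros; ring. Qed.

Lemma step n m (X : vec n -> Prop) (h : vec m -> R) (F : vec n -> vec m)
  (J : vec n -> mat m n) (fstar a b mu L gamma : R) (x z p : vec n) (d0 d1 : R) :
  convex_set X -> X x ->
  (forall xb, X xb -> Rabs (h (F xb) - h (vadd (F x) (matvec (J x) (vsub xb x))))
       <= a * (norm (vsub xb x))^2 + b * norm (vsub xb x)) ->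
  0 < a -> 0 <= b -> 2 * b < mu -> 0 < L -> 0 < gamma < 1 ->
  fstar <= h (F x) -> mu * d0 <= h (F x) - fstar ->
  subdiff_comp h F J x z -> norm z <= L ->
  d0 <= gamma * ((mu - 2 * b) / (2 * a)) ->
  (z = vzero -> p = x) ->
  (z <> vzero -> is_proj X (vsub x (vscale ((h (F x) - fstar) / (norm z)^2) z)) p) ->
  is_dist (fun w => X w /\ h (F w) = fstar) p d1 ->
  is_dist (fun w => X w /\ h (F w) = fstar) x d0 ->
  d1 ^ 2 <= (1 - (1 - gamma) * mu * (mu - 2 * b) / L ^ 2) * d0 ^ 2.
Proof.
  intros Hcv Xx Happ Ha Hb Hmu HL Hg Hf Hsharp Hsub HzL Hd0 Hz0 Hproj Hd1 Hdist0.
  set (g := h (F x) - fstar) in *.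
  set (S := fun w => X w /\ h (F w) = fstar) in *.
  assert (K1 : forall xb, S xb -> dot z (vsub xb x) <=
     a * norm (vsub x xb) ^ 2 + b * norm (vsub x xb) - g).
  { intros xb [Xb Hb']. destruct Hsub as [v [Hv ->]].
    specialize (Hv (vadd (F x) (matvec (J x) (vsub xb x)))).
    assert (E : dot v (vsub (vadd (F x) (matvec (J x) (vsub xb x))) (F x)) = dot v (matvec (J x) (vsub xb x))).
    { unfold dot. apply fsum_ext; intros; unfold vsub, vadd; ring. }
    rewrite E, dot_adj in Hv.
    specialize (Happ xb Xb). rewrite (norm_sym _ xb x) in Happ. rewrite Hb' in Happ.
    pose proof (Rle_abs (- (fstar - h (vadd (F x) (matvec (J x) (vsub xb x)))))) as Hab.
    rewrite Rabs_Ropp in Hab. unfold g. lra. }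
  assert (Hd0nn : 0 <= d0) by (eapply dist_nonneg; eauto).
  assert (Had : 2 * a * d0 <= gamma * (mu - 2 * b)).
  { apply (Rmult_le_compat_l (2 * a)) in Hd0; [|lra].
    replace (2 * a * (gamma * ((mu - 2 * b) / (2 * a)))) with (gamma * (mu - 2 * b)) in Hd0 by (field; lra).
    lra. }
  assert (Hgn : 0 <= g) by (unfold g; lra).
  destruct (Req_dec (dot z z) 0) as [HN|HN].
  -
    assert (Hzi : forall i, z i = 0).
    { intro i. pose proof (fsum_zero_inv n (fun i => z i * z i) (fun i => ltac:(nra)) HN i) as Hi.
      simpl in Hi. nra. }
    assert (Hz : z = vzero) by (apply functional_extensionality; exact Hzi).
    rewrite (Hz0 Hz) in Hd1. rewrite (dist_unique _ _ _ _ _ Hd1 Hdist0).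
    assert (Hineq : mu * d0 <= a * d0 ^ 2 + b * d0).
    { apply (lim_le _ _ (a * (2 * d0 + 1) + b)). intros eps Heps.
      destruct (dist_near _ _ _ _ eps Hdist0 (proj1 Heps)) as [xb [Sxb Hxb]].
      pose proof (K1 xb Sxb) as Hk.
      assert (E : dot z (vsub xb x) = 0).
      { unfold dot. rewrite (fsum_ext _ _ (fun i => 0 * (vsub xb x) i)).
        rewrite fsum_scal. ring. intros; rewrite Hzi; ring. }
      rewrite E in Hk.
      assert (Hlo : d0 <= norm (vsub x xb)) by (apply (proj1 Hdist0); exists xb; auto).
      set (dl := norm (vsub x xb)) in *.
      assert (dl ^ 2 <= d0 ^ 2 + eps * (2 * d0 + 1)) by nra.
      nra. }
    assert (Hpos : 0 < mu - a * d0 - b).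
    { assert (gamma * (mu - 2 * b) < mu - 2 * b) by nra. lra. }
    assert (Hq : d0 * (mu - a * d0 - b) <= 0) by nra.
    assert (d0 = 0).
    { destruct (Rle_or_lt d0 0); [lra|]. pose proof (Rmult_lt_0_compat _ _ H Hpos). lra. } subst d0. nra.
  - assert (HNp : 0 < dot z z) by (pose proof (dot_nonneg _ z); lra).
    assert (Hzne : z <> vzero).
    { intro Hz. apply HN. rewrite Hz. unfold dot, vzero.
      transitivity (fsum n (fun i => 0 * 0)). apply fsum_ext; intros; ring.
      rewrite fsum_scal. ring. }
    specialize (Hproj Hzne). rewrite norm_sq in Hproj.
    set (N := dot z z) in *.
    set (t := g / N) in *.
    assert (Ht : 0 <= t) by (unfold t; unfold Rdiv; apply Rmult_le_pos; [lra| apply Rlt_le, Rinv_0_lt_compat; lra]).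
    assert (HtN : t * t * N = t * g) by (unfold t; field; lra).
    assert (HNL : N <= L ^ 2).
    { unfold N. rewrite <- norm_sq. pose proof (norm_nonneg _ z). nra. }
    assert (Hd1nn : 0 <= d1) by (eapply dist_nonneg; eauto).
    assert (Hmain : d1 ^ 2 <= d0 ^ 2 + 2 * t * (a * d0 ^ 2 + b * d0 - g) + t * g).
    { apply (lim_le _ _ ((2 * d0 + 1) * (1 + 2 * a * t) + 2 * b * t)). intros eps Heps.
      destruct (dist_near _ _ _ _ eps Hdist0 (proj1 Heps)) as [xb [Sxb Hxb]].
      pose proof (K1 xb Sxb) as Hk.
      assert (Hlo : d0 <= norm (vsub x xb)) by (apply (proj1 Hdist0); exists xb; auto).
      assert (Hp1 : d1 <= norm (vsub p xb)) by (apply (proj1 Hd1); exists xb; auto).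
      pose proof (proj_nonexp _ X _ _ xb Hcv Hproj (proj1 Sxb)) as Hpn.
      apply norm_le_dot in Hpn.
      assert (E : dot (vsub (vsub x (vscale t z)) xb) (vsub (vsub x (vscale t z)) xb) =
        1 * dot (vsub x xb) (vsub x xb) + (2 * t) * dot z (vsub xb x) + (t * t) * dot z z).
      { unfold dot. rewrite <- fsum_lin3. apply fsum_ext; intros; unfold vsub, vscale; ring. }
      rewrite E in Hpn. fold N in Hpn. rewrite <- !norm_sq in Hpn.
      set (dl := norm (vsub x xb)) in *.
      set (np := norm (vsub p xb)) in *.
      assert (H1 : d1 ^ 2 <= np ^ 2) by (apply pow_incr; lra).
      assert (H2 : dl ^ 2 <= d0 ^ 2 + eps * (2 * d0 + 1)) by nra.
      assert (H3 : 2 * t * (a * dl ^ 2 + b * dl - g) <= 2 * t * (a * (d0 ^ 2 + eps * (2 * d0 + 1)) + b * (d0 + eps) - g)).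
      { apply Rmult_le_compat_l; nra. }
      nra. }
    assert (H1 : g - 2 * a * d0 ^ 2 - 2 * b * d0 >= (1 - gamma) * (mu - 2 * b) * d0) by nra.
    assert (H2 : mu * d0 / L ^ 2 <= t).
    { unfold t. apply (Rle_trans _ (g / L ^ 2)).
      - unfold Rdiv. apply Rmult_le_compat_r; [apply Rlt_le, Rinv_0_lt_compat; nra| lra].
      - unfold Rdiv. apply Rmult_le_compat_l; [lra|]. apply Rinv_le_contravar; lra. }
    assert (H3 : mu * d0 / L ^ 2 * ((1 - gamma) * (mu - 2 * b) * d0) <= t * (g - 2 * a * d0 ^ 2 - 2 * b * d0)).
    { apply Rmult_le_compat; try lra.
      - unfold Rdiv. apply Rmult_le_pos; [nra|]. apply Rlt_le, Rinv_0_lt_compat; nra.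
      - apply Rmult_le_pos; [apply Rmult_le_pos|]; lra. }
    replace ((1 - (1 - gamma) * mu * (mu - 2 * b) / L ^ 2) * d0 ^ 2)
      with (d0 ^ 2 - mu * d0 / L ^ 2 * ((1 - gamma) * (mu - 2 * b) * d0)) by (field; lra).
    lra.
Qed.

Theorem theorem7p6
  (n m : nat) (X : vec n -> Prop) (h : vec m -> R) (F : vec n -> vec m)
  (J : vec n -> mat m n) (fstar a b mu L gamma : R)
  (xs zeta : nat -> vec n) :
  (exists x : vec n, X x) -> convex_set X -> closed_vset X ->
  convex_fun h ->
  C1_with_jacobian F J ->
  (* fstar = min_X f, attained: X* = argmin_X f nonempty *)
  (exists x : vec n, X x /\ h (F x) = fstar) ->
  (forall x, X x -> fstar <= h (F x)) ->
  0 < a -> 0 <= b -> 2 * b < mu ->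
  (* sharpness *)
  (forall x d, X x -> is_dist (fun z => X z /\ h (F z) = fstar) x d ->
     mu * d <= h (F x) - fstar) ->
  (* two-sided model approximation *)
  (forall x y, X x -> X y ->
     Rabs (h (F y) - h (vadd (F x) (matvec (J x) (vsub y x))))
       <= a * (norm (vsub y x))^2 + b * norm (vsub y x)) ->
  (* L = sup of subgradient norms on the tube, finite and positive *)
  is_sup (fun r => exists (x z : vec n) (d : R), X x /\ is_dist (fun w => X w /\ h (F w) = fstar) x d /\
             d <= (mu - 2 * b) / (2 * a) /\ subdiff_comp h F J x z /\ r = norm z) L ->
  0 < L ->
  0 < gamma < 1 ->
  (* initial point *)
  X (xs 0%nat) ->
  (forall d, is_dist (fun w => X w /\ h (F w) = fstar) (xs 0%nat) d ->
     d <= gamma * ((mu - 2 * b) / (2 * a))) ->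
  (* Polyak subgradient method *)
  (forall k, subdiff_comp h F J (xs k) (zeta k)) ->
  (forall k, zeta k = vzero -> xs (S k) = xs k) ->
  (forall k, zeta k <> vzero ->
     is_proj X (vsub (xs k) (vscale ((h (F (xs k)) - fstar) / (norm (zeta k))^2) (zeta k)))
       (xs (S k))) ->
  forall k d1 d0,
    is_dist (fun w => X w /\ h (F w) = fstar) (xs (S k)) d1 ->
    is_dist (fun w => X w /\ h (F w) = fstar) (xs k) d0 ->
    d1 ^ 2 <= (1 - (1 - gamma) * mu * (mu - 2 * b) / L ^ 2) * d0 ^ 2.
Proof.
  intros Hne Hcv Hcl Hh HF Hmin Hlow Ha Hb Hmu Hsharp Happ Hsup HL Hg X0 Hd00 Hsub Hz0 Hproj.
  set (Sx := fun w => X w /\ h (F w) = fstar) in *.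
  set (c := (mu - 2 * b) / (2 * a)) in *.
  assert (Hc : 0 <= c) by (unfold c; unfold Rdiv; apply Rmult_le_pos; [lra| apply Rlt_le, Rinv_0_lt_compat; lra]).
  assert (HSne : exists y, Sx y) by (destruct Hmin as [y Hy]; exists y; exact Hy).
  assert (Gen : forall k d0 d1, X (xs k) -> is_dist Sx (xs k) d0 -> d0 <= gamma * c ->
     is_dist Sx (xs (S k)) d1 ->
     d1 ^ 2 <= (1 - (1 - gamma) * mu * (mu - 2 * b) / L ^ 2) * d0 ^ 2).
  { intros k d0 d1 Xk Hd0 Hd0c Hd1.
    assert (HzL : norm (zeta k) <= L).
    { apply (proj1 Hsup). exists (xs k), (zeta k), d0.
      split; [exact Xk|split; [exact Hd0|split; [|split; [apply Hsub|reflexivity]]]].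
      assert (gamma * c <= c) by nra. fold c. lra. }
    apply (step n m X h F J fstar a b mu L gamma (xs k) (zeta k) (xs (S k)) d0 d1); auto.
    }
  assert (Inv : forall k, X (xs k) /\ forall d, is_dist Sx (xs k) d -> d <= gamma * c).
  { induction k as [|k [Xk Hk]]; [split; auto|]. split.
    - destruct (classic (zeta k = vzero)) as [Hz|Hz].
      + rewrite (Hz0 k Hz). exact Xk.
      + exact (proj1 (Hproj k Hz)).
    - intros d Hd. destruct (dist_exists _ Sx (xs k) HSne) as [d0 Hd0].
      pose proof (Hk d0 Hd0) as Hb0.
      pose proof (Gen k d0 d Xk Hd0 Hb0 Hd) as Hstep.
      pose proof (dist_nonneg _ _ _ _ Hd). pose proof (dist_nonneg _ _ _ _ Hd0).
      assert (HC : 0 <= (1 - gamma) * mu * (mu - 2 * b) / L ^ 2).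
      { unfold Rdiv. apply Rmult_le_pos; [apply Rmult_le_pos; [apply Rmult_le_pos|]; lra|].
        apply Rlt_le, Rinv_0_lt_compat; nra. }
      assert (d ^ 2 <= d0 ^ 2) by nra.
      assert (d <= d0) by nra. lra. }
  intros k d1 d0 Hd1 Hd0. destruct (Inv k) as [Xk Hk].
  apply (Gen k d0 d1 Xk Hd0 (Hk d0 Hd0) Hd1).
Qed.
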